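(* Let $M$ be a complete $\mathrm{CAT}(0)$ space, $\mathcal{C}$ a collection of closed convex subspaces such that $(M,\mathcal{C})$ is a $(\nu,\phi)$--relatively hyperbolic pair. Put $\nu'=4\nu+2\phi(\nu)$, $\nu''=4\nu+2\phi(\nu')$, $\Delta(\nu,\phi)=\nu'+\nu''$. Let $Z\in\mathcal{C}$, $\pi_Z\colon M\to Z$ the closest point projection, $a,b\in M$, and $Q$ the geodesic quadrilateral with vertices $\pi_Z(a),a,b,\pi_Z(b)$. Then either $d(\pi_Z(a),\pi_Z(b))\le\phi(\nu')+2\nu+3\nu'$ or $Q$ is $\Delta(\nu,\phi)$--slim.
   Context: For a geodesic triangle with comparison-tripod map $\pi$: it is $\nu$--thin if all fibers of $\pi$ have diameter $\le\nu$; it is $\nu$--thin relative to $U$ if it is not $\nu$--thin and every fiber either has diameter $\le\nu$ or lies in $N_\nu(U)$. $(M,\mathcal{U})$ has $\nu$--relatively thin triangles if every geodesic triangle is $\nu$--thin or $\nu$--thin relative to some $U\in\mathcal{U}$. $(M,\mathcal{U})$ is a $(\nu,\phi)$--relatively hyperbolic pair ($\phi\colon\mathbb{R}_{\ge0}\to\mathbb{R}_{\ge0}$) if it has $\nu$--relatively thin triangles and $\operatorname{diam}(N_r(F_1)\cap N_r(F_2))\le\phi(r)$ for all $r\ge0$ and distinct $F_1,F_2\in\mathcal{U}$. A polygon is $\mu$--slim if each side lies in the $\mu$--neighborhood of the union of the other sides. *)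

(* Defs.v *)
From Stdlib Require Export Reals.
From Stdlib Require Import Lra.
Set Implicit Arguments.
Open Scope R_scope.

Section Defs.
Variable M : Type.
Variable d : M -> M -> R.

Definition is_metric : Prop :=
  (forall x y, 0 <= d x y) /\ (forall x y, d x y = 0 <-> x = y) /\
  (forall x y, d x y = d y x) /\ (forall x y z, d x z <= d x y + d y z).

Definition converges (u : nat -> M) (l : M) : Prop :=
  forall eps, 0 < eps -> exists N, forall n, (N <= n)%nat -> d (u n) l < eps.

Definition cauchy (u : nat -> M) : Prop :=
  forall eps, 0 < eps -> exists N, forall m n, (N <= m)%nat -> (N <= n)%nat ->
    d (u m) (u n) < eps.

Definition complete_metric : Prop := forall u, cauchy u -> exists l, converges u l.

Definition geodesic (g : R -> M) (x y : M) : Prop :=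
  g 0 = x /\ g (d x y) = y /\
  forall s t, 0 <= s <= d x y -> 0 <= t <= d x y -> d (g s) (g t) = Rabs (s - t).

Definition on_seg (g : R -> M) (x y : M) (p : M) : Prop :=
  exists t, 0 <= t <= d x y /\ p = g t.

(** CAT(0): geodesic space in which, for every geodesic triangle with vertex x
    and sides g1 = [x,y], g2 = [x,z], the distance between the point at
    fraction lam of [x,y] and the point at fraction mu of [x,z] is at most the
    distance between the corresponding points of the Euclidean comparison
    triangle (x̄ = 0, |ȳ| = a, |z̄| = b, |ȳ - z̄| = c), i.e.
    |lam ȳ - mu z̄|^2 = lam^2 a^2 + mu^2 b^2 - lam mu (a^2 + b^2 - c^2).
    Every pair of points of a geodesic triangle lies on two sides sharing a
    vertex (or on one side), so this is the CAT(0) inequality. *)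
Definition CAT0 : Prop :=
  (forall x y, exists g, geodesic g x y) /\
  forall x y z g1 g2 lam mu,
    geodesic g1 x y -> geodesic g2 x z -> 0 <= lam <= 1 -> 0 <= mu <= 1 ->
    let a := d x y in let b := d x z in let c := d y z in
    (d (g1 (lam * a)) (g2 (mu * b)))^2 <=
      lam^2 * a^2 + mu^2 * b^2 - lam * mu * (a^2 + b^2 - c^2).

Definition closed_sub (U : M -> Prop) : Prop :=
  forall u l, (forall n, U (u n)) -> converges u l -> U l.

Definition convex_sub (U : M -> Prop) : Prop :=
  forall x y g, U x -> U y -> geodesic g x y ->
    forall t, 0 <= t <= d x y -> U (g t).

Definition nbhd (r : R) (U : M -> Prop) (p : M) : Prop :=
  exists u, U u /\ d p u <= r.

Definition is_proj (Z : M -> Prop) (piZ : M -> M) : Prop :=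
  forall x, Z (piZ x) /\ forall z, Z z -> d x (piZ x) <= d x z.

Inductive idx3 := I0 | I1 | I2.
Definition next (i : idx3) : idx3 := match i with I0 => I1 | I1 => I2 | I2 => I0 end.
Definition prev (i : idx3) : idx3 := match i with I0 => I2 | I1 => I0 | I2 => I1 end.

Definition is_triangle (V : idx3 -> M) (G : idx3 -> R -> M) : Prop :=
  forall i, geodesic (G i) (V i) (V (next i)).

Section Tri.

Variable V : idx3 -> M.
Definition len (i : idx3) : R := d (V i) (V (next i)).
(** Gromov product at vertex V i = length of leg i of the comparison tripod *)
Definition gprod (i : idx3) : R := (len i + len (prev i) - len (next i)) / 2.

(** Comparison tripod map: the point at parameter s of side i goes to the
    point on leg (fst) of the tripod at distance (snd) from the centre. *)
Definition tripod (i : idx3) (s : R) : idx3 * R :=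
  if Rle_dec s (gprod i) then (i, gprod i - s) else (next i, s - gprod i).

Definition same_tripod_pt (p q : idx3 * R) : Prop :=
  snd p = snd q /\ (snd p = 0 \/ fst p = fst q).

Variable G : idx3 -> R -> M.

Definition in_fiber (tp : idx3 * R) (p : M) : Prop :=
  exists j t, 0 <= t <= len j /\ p = G j t /\ same_tripod_pt (tripod j t) tp.

Definition fiber_diam_le (nu : R) (i : idx3) (s : R) : Prop :=
  forall p q, in_fiber (tripod i s) p -> in_fiber (tripod i s) q -> d p q <= nu.

Definition fiber_in (nu : R) (U : M -> Prop) (i : idx3) (s : R) : Prop :=
  forall p, in_fiber (tripod i s) p -> nbhd nu U p.

Definition thin (nu : R) : Prop :=
  forall i s, 0 <= s <= len i -> fiber_diam_le nu i s.

Definition thin_rel (nu : R) (U : M -> Prop) : Prop :=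
  ~ thin nu /\
  forall i s, 0 <= s <= len i -> fiber_diam_le nu i s \/ fiber_in nu U i s.
End Tri.

Definition rel_thin_triangles (C : (M -> Prop) -> Prop) (nu : R) : Prop :=
  forall V G, is_triangle V G -> thin V G nu \/ exists U, C U /\ thin_rel V G nu U.

Definition rel_hyp_pair (C : (M -> Prop) -> Prop) (nu : R) (phi : R -> R) : Prop :=
  rel_thin_triangles C nu /\
  forall r F1 F2, 0 <= r -> C F1 -> C F2 -> ~ (forall x, F1 x <-> F2 x) ->
    forall x y, nbhd r F1 x -> nbhd r F2 x -> nbhd r F1 y -> nbhd r F2 y ->
      d x y <= phi r.

Definition quad_slim (mu : R) (x0 x1 x2 x3 : M) (g0 g1 g2 g3 : R -> M) : Prop :=
  let S0 := on_seg g0 x0 x1 in let S1 := on_seg g1 x1 x2 in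
  let S2 := on_seg g2 x2 x3 in let S3 := on_seg g3 x3 x0 in
  (forall p, S0 p -> nbhd mu (fun q => S1 q \/ S2 q \/ S3 q) p) /\
  (forall p, S1 p -> nbhd mu (fun q => S0 q \/ S2 q \/ S3 q) p) /\
  (forall p, S2 p -> nbhd mu (fun q => S0 q \/ S1 q \/ S3 q) p) /\
  (forall p, S3 p -> nbhd mu (fun q => S0 q \/ S1 q \/ S2 q) p).
End Defs.

Definition nu_prime (nu : R) (phi : R -> R) : R := 4 * nu + 2 * phi nu.
Definition nu_dprime (nu : R) (phi : R -> R) : R := 4 * nu + 2 * phi (nu_prime nu phi).
Definition Delta (nu : R) (phi : R -> R) : R := nu_prime nu phi + nu_dprime nu phi.

(* Main.v *)
Require Import Defs.
From Stdlib Require Import Lra Psatz Classical.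
Open Scope R_scope.

Lemma d_nonneg {M d} (Hm : is_metric (M:=M) d) x y : 0 <= d x y.
Proof. destruct Hm as [H _]; apply H. Qed.
Lemma d_sym {M d} (Hm : is_metric (M:=M) d) x y : d x y = d y x.
Proof. destruct Hm as [_ [_ [H _]]]; apply H. Qed.
Lemma d_tri {M d} (Hm : is_metric (M:=M) d) x y z : d x z <= d x y + d y z.
Proof. destruct Hm as [_ [_ [_ H]]]; apply H. Qed.
Lemma d_refl {M d} (Hm : is_metric (M:=M) d) x : d x x = 0.
Proof. destruct Hm as [_ [H _]]; apply H; reflexivity. Qed.

Section Sec_AG.
Context {M : Type} {d : M -> M -> R} (Hm : is_metric d).

Lemma geo_dist {g x y s t} : geodesic d g x y -> 0 <= s <= d x y -> 0 <= t <= d x y ->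
  d (g s) (g t) = Rabs (s - t).
Proof. intros [_ [_ H]] Hs Ht; apply H; auto. Qed.

Lemma geo_from {g x y t} : geodesic d g x y -> 0 <= t <= d x y -> d x (g t) = t.
Proof.
  intros Hg Ht. pose proof Hg as [H0 _]. rewrite <- H0 at 1.
  rewrite (geo_dist Hg). rewrite Rabs_left1; lra.
  pose proof (d_nonneg Hm x y); lra. auto.
Qed.

Lemma geo_to {g x y t} : geodesic d g x y -> 0 <= t <= d x y -> d (g t) y = d x y - t.
Proof.
  intros Hg Ht. pose proof Hg as [_ [H1 _]]. rewrite <- H1 at 1.
  rewrite (geo_dist Hg). rewrite Rabs_left1; lra. auto.
  pose proof (d_nonneg Hm x y); lra.
Qed.

Lemma rev_geo {g x y} : geodesic d g x y -> geodesic d (fun t => g (d x y - t)) y x.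
Proof.
  intros Hg. pose proof Hg as [H0 [H1 H]]. unfold geodesic. rewrite (d_sym Hm y x).
  split; [|split].
  - replace (d x y - 0) with (d x y) by lra; auto.
  - replace (d x y - d x y) with 0 by lra; auto.
  - intros s t Hs Ht. rewrite H by lra. rewrite Rabs_minus_sym. f_equal; lra.
Qed.

Lemma sub_fwd {g x y t1 t2} : geodesic d g x y -> 0 <= t1 -> t1 <= t2 -> t2 <= d x y ->
  geodesic d (fun u => g (t1 + u)) (g t1) (g t2) /\ d (g t1) (g t2) = t2 - t1.
Proof.
  intros Hg a b c. assert (E : d (g t1) (g t2) = t2 - t1).
  { rewrite (geo_dist Hg) by lra. rewrite Rabs_left1; lra. }
  split; auto. unfold geodesic. rewrite E. split; [|split].
  - f_equal; lra.
  - f_equal; lra.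
  - intros s t Hs Ht. rewrite (geo_dist Hg) by lra. f_equal; lra.
Qed.

Lemma sub_bwd {g x y t1 t2} : geodesic d g x y -> 0 <= t1 -> t1 <= t2 -> t2 <= d x y ->
  geodesic d (fun u => g (t2 - u)) (g t2) (g t1) /\ d (g t2) (g t1) = t2 - t1.
Proof.
  intros Hg a b c. assert (E : d (g t2) (g t1) = t2 - t1).
  { rewrite (geo_dist Hg) by lra. rewrite Rabs_right; lra. }
  split; auto. unfold geodesic. rewrite E. split; [|split].
  - f_equal; lra.
  - f_equal; lra.
  - intros s t Hs Ht. rewrite (geo_dist Hg) by lra. rewrite <- Rabs_Ropp. f_equal; lra.
Qed.

End Sec_AG.

Section Sec_BC.
Context {M : Type} {d : M -> M -> R} (Hm : is_metric d) (Hc : CAT0 d).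

Lemma cone {g1 g2 x y z} lam : geodesic d g1 x y -> geodesic d g2 x z -> 0 <= lam <= 1 ->
  d (g1 (lam * d x y)) (g2 (lam * d x z)) <= lam * d y z.
Proof.
  intros H1 H2 Hl. destruct Hc as [_ Hc2].
  pose proof (Hc2 x y z g1 g2 lam lam H1 H2 Hl Hl) as H. simpl in H.
  pose proof (d_nonneg Hm (g1 (lam * d x y)) (g2 (lam * d x z))).
  pose proof (d_nonneg Hm y z).
  set (X := d (g1 (lam * d x y)) (g2 (lam * d x z))) in *.
  assert (X ^ 2 <= (lam * d y z) ^ 2) by nra.
  assert (0 <= lam * d y z) by nra.
  destruct (Rle_dec X (lam * d y z)); auto.
  assert ((lam * d y z) * (lam * d y z) < X * X) by (apply Rmult_le_0_lt_compat; lra).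
  nra.
Qed.

Lemma convex_geo {g g' x y x' y'} r s : geodesic d g x y -> geodesic d g' x' y' ->
  d x x' <= r -> d y y' <= r -> 0 <= s <= d x y ->
  exists s', 0 <= s' <= d x' y' /\ d (g s) (g' s') <= r.
Proof.
  intros Hg Hg' Hx Hy Hs.
  pose proof (d_nonneg Hm x y) as Lp.
  destruct (Req_dec (d x y) 0) as [L0|L0].
  - exists 0. pose proof (d_nonneg Hm x' y'). split; [lra|].
    assert (s = 0) by lra. subst s. destruct Hg as [-> _]. destruct Hg' as [-> _]. auto.
  - set (lam := s / d x y).
    assert (Hl : 0 <= lam <= 1).
    { unfold lam; split. unfold Rdiv; apply Rmult_le_pos; [lra|]; apply Rlt_le, Rinv_0_lt_compat; lra.
      apply (Rmult_le_reg_r (d x y)); [lra|]. unfold Rdiv. rewrite Rmult_assoc, Rinv_l by lra. lra. }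
    assert (Es : lam * d x y = s). { unfold lam. field. auto. }
    destruct Hc as [Hex _]. destruct (Hex x y') as [dl Hdl].
    pose proof (d_nonneg Hm x' y').
    pose proof (d_nonneg Hm x y').
    exists (lam * d x' y'). split. split; nra.
    pose proof (cone lam Hg Hdl Hl) as C1. rewrite Es in C1.
    pose proof (rev_geo Hm Hdl) as Hr1. pose proof (rev_geo Hm Hg') as Hr2.
    assert (Hl' : 0 <= 1 - lam <= 1) by lra.
    pose proof (cone (1 - lam) Hr1 Hr2 Hl') as C2. simpl in C2.
    rewrite (d_sym Hm y' x) in C2.
    replace (d x y' - (1 - lam) * d x y') with (lam * d x y') in C2 by ring.
    replace (d x' y' - (1 - lam) * d y' x') with (lam * d x' y') in C2
      by (rewrite (d_sym Hm y' x'); ring).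
    idtac.
    pose proof (d_tri Hm (g s) (dl (lam * d x y')) (g' (lam * d x' y'))). nra.
Qed.

End Sec_BC.

Lemma lip_cont (f : R -> R) c : (forall x y, Rabs (f x - f y) <= Rabs (x - y)) -> continuity_pt f c.
Proof.
  intros H. unfold continuity_pt, continue_in, limit1_in, limit_in.
  intros eps Heps. exists eps. split; auto. intros x [_ Hx]. simpl in *. unfold R_dist in *.
  specialize (H x c). lra.
Qed.

Lemma clamp_lip L t t' : 0 <= L ->
  Rabs (Rmax 0 (Rmin L t) - Rmax 0 (Rmin L t')) <= Rabs (t - t').
Proof.
  intros HL. unfold Rmax, Rmin. repeat destruct Rle_dec; unfold Rabs; repeat destruct Rcase_abs; lra.
Qed.

Lemma near_closed {M d} (Hm : is_metric (M:=M) d) {g x y} p c : geodesic d g x y ->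
  (forall eps, 0 < eps -> exists t, 0 <= t <= d x y /\ d p (g t) <= c + eps) ->
  exists t, 0 <= t <= d x y /\ d p (g t) <= c.
Proof.
  intros Hg H. pose proof (d_nonneg Hm x y) as HL. set (L := d x y) in *.
  set (f := fun t => d p (g (Rmax 0 (Rmin L t)))).
  assert (Hcl : forall t, 0 <= t <= L -> Rmax 0 (Rmin L t) = t).
  { intros t Ht. unfold Rmax, Rmin. repeat destruct Rle_dec; lra. }
  assert (Hr : forall t, 0 <= Rmax 0 (Rmin L t) <= L).
  { intros t. unfold Rmax, Rmin. repeat destruct Rle_dec; lra. }
  assert (Hlip : forall t t', Rabs (f t - f t') <= Rabs (t - t')).
  { intros t t'. unfold f.
    pose proof (d_tri Hm p (g (Rmax 0 (Rmin L t'))) (g (Rmax 0 (Rmin L t)))).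
    pose proof (d_tri Hm p (g (Rmax 0 (Rmin L t))) (g (Rmax 0 (Rmin L t')))).
    assert (Hd : forall a b, d (g (Rmax 0 (Rmin L a))) (g (Rmax 0 (Rmin L b))) = Rabs (Rmax 0 (Rmin L a) - Rmax 0 (Rmin L b))).
    { intros a b. apply (geo_dist Hg); apply Hr. }
    rewrite Hd in H0, H1.
    pose proof (clamp_lip L t t' HL).
    apply Rabs_le.
    assert (Rabs (Rmax 0 (Rmin L t') - Rmax 0 (Rmin L t)) = Rabs (Rmax 0 (Rmin L t) - Rmax 0 (Rmin L t'))) by apply Rabs_minus_sym.
    split; lra. }
  destruct (continuity_ab_min f 0 L HL (fun c0 _ => lip_cont f c0 Hlip)) as [mx [Hmin Hmx]].
  exists mx. split; auto.
  destruct (Rle_dec (d p (g mx)) c) as [|Hn]; auto.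
  destruct (H ((d p (g mx) - c) / 2)) as [t [Ht Hd]]. lra.
  specialize (Hmin t Ht). unfold f in Hmin. rewrite !Hcl in Hmin by auto. lra.
Qed.

Lemma three_points (P F B : R -> Prop) phi s1 s2 s3 :
  0 <= phi ->
  (forall s s', F s -> F s' -> Rabs (s - s') <= phi) ->
  (forall s s', B s -> B s' -> Rabs (s - s') <= phi) ->
  s2 - s1 > phi -> s3 - s2 > phi ->
  (P s1 \/ F s1 \/ B s1) -> (P s2 \/ F s2 \/ B s2) -> (P s3 \/ F s3 \/ B s3) ->
  P s1 \/ P s2 \/ P s3.
Proof.
  intros Hp HF HB h12 h23 H1 H2 H3.
  assert (A12 : Rabs (s1 - s2) > phi) by (rewrite Rabs_minus_sym, Rabs_right; lra).
  assert (A23 : Rabs (s2 - s3) > phi) by (rewrite Rabs_minus_sym, Rabs_right; lra).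
  assert (A13 : Rabs (s1 - s3) > phi) by (rewrite Rabs_minus_sym, Rabs_right; lra).
  destruct H1 as [|[H1|H1]]; auto; destruct H2 as [|[H2|H2]]; auto; destruct H3 as [|[H3|H3]]; auto;
  first [ specialize (HF _ _ H1 H2) | specialize (HB _ _ H1 H2) | specialize (HF _ _ H1 H3)
        | specialize (HB _ _ H1 H3) | specialize (HF _ _ H2 H3) | specialize (HB _ _ H2 H3) ]; lra.
Qed.

Section Sec_TT.
Context {M : Type} {d : M -> M -> R} (Hm : is_metric d).

Lemma gprod_bounds V i : 0 <= gprod d V i <= len d V i /\ gprod d V i <= len d V (prev i).
Proof.
  pose proof (d_tri Hm (V I0) (V I1) (V I2)). pose proof (d_tri Hm (V I1) (V I2) (V I0)).
  pose proof (d_tri Hm (V I2) (V I0) (V I1)).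
  pose proof (d_sym Hm (V I0) (V I1)). pose proof (d_sym Hm (V I1) (V I2)).
  pose proof (d_sym Hm (V I2) (V I0)).
  destruct i; unfold gprod, len, prev, next; simpl; lra.
Qed.

Lemma gprod_prev V i : gprod d V (prev i) = len d V (prev i) - gprod d V i.
Proof. destruct i; unfold gprod, len, prev, next; simpl; lra. Qed.

Lemma next_prev i : next (prev i) = i.
Proof. destruct i; reflexivity. Qed.

Lemma corner_fiber V G i t : 0 <= t <= gprod d V i ->
  in_fiber d V G (tripod d V i t) (G i t) /\
  in_fiber d V G (tripod d V i t) (G (prev i) (len d V (prev i) - t)).
Proof.
  intros Ht. destruct (gprod_bounds V i) as [[H0 H1] H2].
  assert (Etr : tripod d V i t = (i, gprod d V i - t)).
  { unfold tripod. destruct Rle_dec; [reflexivity| lra]. }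
  split.
  - exists i, t. split; [lra|]. split; [reflexivity|]. unfold same_tripod_pt; split; auto.
  - exists (prev i), (len d V (prev i) - t). split; [lra|]. split; [reflexivity|].
    rewrite Etr. unfold tripod. pose proof (gprod_prev V i) as Gp.
    destruct Rle_dec as [r|r].
    + unfold same_tripod_pt; simpl. assert (t = gprod d V i) by lra. split; [lra|]. left; lra.
    + unfold same_tripod_pt; simpl. rewrite next_prev. split; [lra|]. right; reflexivity.
Qed.


Lemma tri_dich C nu V G : rel_thin_triangles d C nu -> is_triangle d V G ->
  (forall i t, 0 <= t <= gprod d V i -> d (G i t) (G (prev i) (len d V (prev i) - t)) <= nu)
  \/ exists U, C U /\ forall i t, 0 <= t <= gprod d V i ->
       d (G i t) (G (prev i) (len d V (prev i) - t)) <= nu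
       \/ (nbhd d nu U (G i t) /\ nbhd d nu U (G (prev i) (len d V (prev i) - t))).
Proof.
  intros Hr Ht. destruct (Hr V G Ht) as [Hth | [U [HU [_ Hrel]]]].
  - left. intros i t H. destruct (gprod_bounds V i) as [[H0 H1] H2].
    destruct (corner_fiber V G i t H) as [F1 F2].
    exact (Hth i t ltac:(lra) _ _ F1 F2).
  - right. exists U. split; auto. intros i t H. destruct (gprod_bounds V i) as [[H0 H1] H2].
    destruct (corner_fiber V G i t H) as [F1 F2].
    destruct (Hrel i t ltac:(lra)) as [A|A].
    + left. exact (A _ _ F1 F2).
    + right. split; [exact (A _ F1) | exact (A _ F2)].
Qed.
End Sec_TT.

Lemma interval_cover (F B : R -> Prop) phi lo m : 0 <= phi ->
  (forall s s', F s -> F s' -> Rabs (s - s') <= phi) ->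
  (forall s s', B s -> B s' -> Rabs (s - s') <= phi) ->
  (forall s, lo < s <= m -> F s \/ B s) -> m <= lo + 2 * phi.
Proof.
  intros Hp HF HB H. destruct (Rle_dec m (lo + 2 * phi)) as [|Hn]; auto. exfalso.
  set (e := (m - lo - 2 * phi) / 3).
  assert (e > 0) by (unfold e; lra).
  assert (K : False \/ False \/ False).
  { apply (three_points (fun _ => False) F B phi (lo + e) (lo + phi + 2 * e) (lo + 2 * phi + 3 * e)); auto; try lra;
    right; apply H; unfold e in *; lra. }
  tauto.
Qed.

Lemma interval_find (P F B : R -> Prop) phi lo hi e : 0 <= phi -> 0 < e ->
  (forall s s', F s -> F s' -> Rabs (s - s') <= phi) ->
  (forall s s', B s -> B s' -> Rabs (s - s') <= phi) ->
  (forall s, lo <= s <= hi -> P s \/ F s \/ B s) -> lo + 2 * phi + e <= hi ->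
  exists s, lo <= s <= lo + 2 * phi + e /\ P s.
Proof.
  intros Hp He HF HB H Hh.
  destruct (three_points P F B phi lo (lo + phi + e / 2) (lo + 2 * phi + e)) as [K|[K|K]];
   auto; try lra; try (apply H; lra).
  - exists lo; split; auto; lra.
  - exists (lo + phi + e / 2); split; auto; lra.
  - exists (lo + 2 * phi + e); split; auto; lra.
Qed.

Lemma nbhd_mono {M} (d : M -> M -> R) r r' U x : r <= r' -> nbhd d r U x -> nbhd d r' U x.
Proof. intros H [u [Hu Hd]]. exists u. split; auto. lra. Qed.

Lemma nbhd_self {M} (d : M -> M -> R) (Hm : is_metric d) r (U : M -> Prop) x : 0 <= r -> U x -> nbhd d r U x.
Proof. intros H Hx. exists x. split; auto. rewrite (d_refl Hm). auto. Qed.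

Lemma nbhd_equiv {M} (d : M -> M -> R) r (U Z : M -> Prop) x : (forall y, U y <-> Z y) -> nbhd d r U x -> nbhd d r Z x.
Proof. intros H [u [Hu Hd]]. exists u. split; auto. apply H; auto. Qed.

Lemma proj_far {M} (d : M -> M -> R) (Hm : is_metric d) Z pi x w z s : is_proj d Z pi -> Z z ->
  d x w + s <= d x (pi x) -> s <= d w z.
Proof.
  intros Hp Hz H. destruct (Hp x) as [_ Hmin]. specialize (Hmin z Hz).
  pose proof (d_tri Hm x w z). lra.
Qed.

Lemma nbhd_proj_far {M} (d : M -> M -> R) (Hm : is_metric d) Z pi x w s r : is_proj d Z pi ->
  d x w + s <= d x (pi x) -> nbhd d r Z w -> s <= r.
Proof.
  intros Hp H [z [Hz Hd]]. pose proof (proj_far d Hm Z pi x w z s Hp Hz H). lra.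
Qed.

Definition phi0 nu (phi : R -> R) := Rmin (phi nu) (phi (nu_prime nu phi)).

Section Sec_CoreCore.
Context {M : Type} {d : M -> M -> R} (Hm : is_metric d) (Hc : CAT0 d)
  (C : (M -> Prop) -> Prop) (nu : R) (phi : R -> R)
  (Hconv : forall U, C U -> convex_sub d U) (Hnu : 0 <= nu)
  (Hphi : forall r, 0 <= r -> 0 <= phi r) (Hrh : rel_hyp_pair d C nu phi)
  (Z : M -> Prop) (HZ : C Z) (pi : M -> M) (Hpi : is_proj d Z pi).

Lemma phi0_nonneg : 0 <= phi0 nu phi.
Proof.
  unfold phi0, nu_prime. apply Rmin_glb; apply Hphi; auto.
  pose proof (Hphi nu Hnu). lra.
Qed.

Lemma phi0_le : phi0 nu phi <= phi nu.
Proof. unfold phi0. apply Rmin_l. Qed.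

Lemma phi0_bound F1 F2 x y : C F1 -> C F2 -> ~ (forall z, F1 z <-> F2 z) ->
  nbhd d nu F1 x -> nbhd d nu F2 x -> nbhd d nu F1 y -> nbhd d nu F2 y -> d x y <= phi0 nu phi.
Proof.
  intros H1 H2 Hn a b c e. destruct Hrh as [_ Hp].
  pose proof (Hphi nu Hnu). assert (nu <= nu_prime nu phi) by (unfold nu_prime; lra).
  unfold phi0. apply Rmin_glb.
  - apply (Hp nu F1 F2); auto.
  - apply (Hp (nu_prime nu phi) F1 F2); auto; try lra; eapply nbhd_mono; eauto.
Qed.


Lemma core a b g0 g1 g2 g3 :
  geodesic d g0 (pi a) a -> geodesic d g1 a b -> geodesic d g2 b (pi b) ->
  geodesic d g3 (pi b) (pi a) ->
  3 * nu + 5 * phi0 nu phi < d (pi a) (pi b) ->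
  exists t, 0 <= t <= d a b /\ d (pi a) (g1 t) <= 3 * nu + 4 * phi0 nu phi.
Proof.
  intros H0 H1 H2 H3 HD.
  pose proof phi0_nonneg as Hf0.
  set (f0 := phi0 nu phi) in *.
  set (p := pi a) in *. set (q := pi b) in *.
  destruct Hc as [Hex _]. destruct (Hex p b) as [h Hh].
  assert (Zp : Z p) by (apply Hpi). assert (Zq : Z q) by (apply Hpi).
  assert (Z3 : forall t, 0 <= t <= d q p -> Z (g3 t)).
  { intros t Ht. apply (Hconv Z HZ q p g3); auto. }
  set (V2 := fun i => match i with I0 => q | I1 => p | I2 => b end).
  set (G2 := fun i => match i with I0 => g3 | I1 => h | I2 => g2 end).
  assert (T2 : is_triangle d V2 G2) by (intros []; simpl; auto).
  destruct Hrh as [Hrt _].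
  pose proof (tri_dich Hm C nu V2 G2 Hrt T2) as D2.
  pose proof (gprod_bounds Hm V2 I0) as B20. pose proof (gprod_bounds Hm V2 I1) as B21.
  unfold gprod, len in B20, B21. simpl in B20, B21.
  set (Gq := (d q p + d b q - d p b) / 2) in *.
  set (Gp2 := (d p b + d q p - d b q) / 2) in *.
  assert (D2' : ((forall t, 0 <= t <= Gq -> d (g3 t) (g2 (d b q - t)) <= nu) /\
                 (forall t, 0 <= t <= Gp2 -> d (h t) (g3 (d q p - t)) <= nu))
            \/ exists U, C U /\
               (forall t, 0 <= t <= Gq -> d (g3 t) (g2 (d b q - t)) <= nu \/
                  (nbhd d nu U (g3 t) /\ nbhd d nu U (g2 (d b q - t)))) /\
               (forall t, 0 <= t <= Gp2 -> d (h t) (g3 (d q p - t)) <= nu \/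
                  (nbhd d nu U (h t) /\ nbhd d nu U (g3 (d q p - t))))).
  { destruct D2 as [X|[U [HU X]]].
    - left; split; intros t Ht; [exact (X I0 t Ht) | exact (X I1 t Ht)].
    - right; exists U; split; auto; split; intros t Ht; [exact (X I0 t Ht) | exact (X I1 t Ht)]. }
  clear D2.
  assert (far2 : forall t z, 0 <= t <= d b q -> Z z -> t <= d (g2 (d b q - t)) z).
  { intros t z Ht Hz. apply (proj_far d Hm Z pi b _ z t Hpi Hz).
    rewrite (geo_from Hm H2) by lra. fold q. lra. }
  assert (Gqb : Gq <= nu + f0).
  { destruct (Rle_dec Gq (nu + f0)) as [|Hn]; auto. exfalso.
    assert (PB : forall t, 0 <= t <= Gq -> t <= d (g3 t) (g2 (d b q - t))).
    { intros t Ht. rewrite (d_sym Hm). apply far2; [lra|]. apply Z3. lra. }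
    destruct D2' as [[X _]|[U [HU [X _]]]].
    - specialize (X Gq ltac:(lra)). specialize (PB Gq ltac:(lra)). lra.
    - assert (K : forall t, nu < t <= Gq -> nbhd d nu U (g3 t) /\ ~ (forall z, U z <-> Z z)).
      { intros t Ht. destruct (X t ltac:(lra)) as [Y|[Y1 Y2]].
        - specialize (PB t ltac:(lra)). lra.
        - split; auto. intros Heq. apply (nbhd_equiv d nu U Z) in Y2; auto.
          destruct Y2 as [z [Hz Hdz]]. specialize (far2 t z ltac:(lra) Hz). lra. }
      set (t1 := (nu + (Gq - f0)) / 2).
      destruct (K t1) as [Y1 N1]. unfold t1; lra.
      destruct (K Gq) as [Y2 _]. lra.
      pose proof (phi0_bound U Z (g3 t1) (g3 Gq) HU HZ N1 Y1
        (nbhd_self d Hm nu Z _ Hnu (Z3 t1 ltac:(unfold t1; lra))) Y2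
        (nbhd_self d Hm nu Z _ Hnu (Z3 Gq ltac:(lra)))) as W.
      rewrite (geo_dist H3) in W by (unfold t1; lra).
      rewrite Rabs_left in W by (unfold t1; lra). fold f0 in W. unfold t1 in W. lra. }
  assert (GB : exists Bad : R -> Prop, (forall s s', Bad s -> Bad s' -> Rabs (s - s') <= f0) /\
     forall s, 0 <= s <= Gp2 -> nbhd d nu Z (h s) \/ Bad s).
  { destruct D2' as [[_ X]|[U [HU [_ X]]]].
    - exists (fun _ => False). split; [tauto|]. intros s Hs. left.
      exists (g3 (d q p - s)). split; [apply Z3; lra | apply X; auto].
    - destruct (classic (forall z, U z <-> Z z)) as [Heq|Hneq].
      + exists (fun _ => False). split; [tauto|]. intros s Hs. left.
        destruct (X s Hs) as [Y|[Y _]].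
        * exists (g3 (d q p - s)). split; [apply Z3; lra | auto].
        * apply (nbhd_equiv d nu U Z); auto.
      + exists (fun s => 0 <= s <= d q p /\ nbhd d nu U (g3 (d q p - s))).
        split.
        * intros s s' [Hs Ys] [Hs' Ys'].
          pose proof (phi0_bound U Z _ _ HU HZ Hneq Ys
             (nbhd_self d Hm nu Z _ Hnu (Z3 (d q p - s) ltac:(lra))) Ys'
             (nbhd_self d Hm nu Z _ Hnu (Z3 (d q p - s') ltac:(lra)))) as W.
          rewrite (geo_dist H3) in W by lra.
          replace (d q p - s - (d q p - s')) with (- (s - s')) in W by ring.
          rewrite Rabs_Ropp in W. exact W.
        * intros s Hs. destruct (X s Hs) as [Y|[_ Y]].
          -- left. exists (g3 (d q p - s)). split; [apply Z3; lra | auto].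
          -- right. split; [lra|auto]. }
  destruct GB as [Bad [HBad Hgb]].
  set (hr := fun t => h (d p b - t)).
  assert (Hhr : geodesic d hr b p) by (apply (rev_geo Hm Hh)).
  set (V1 := fun i => match i with I0 => p | I1 => a | I2 => b end).
  set (G1 := fun i => match i with I0 => g0 | I1 => g1 | I2 => hr end).
  assert (T1 : is_triangle d V1 G1) by (intros []; simpl; auto).
  pose proof (tri_dich Hm C nu V1 G1 Hrt T1) as D1.
  pose proof (gprod_bounds Hm V1 I0) as B10. pose proof (gprod_bounds Hm V1 I1) as B11.
  pose proof (gprod_bounds Hm V1 I2) as B12.
  unfold gprod, len in B10, B11, B12. simpl in B10, B11, B12.
  set (Gp1 := (d p a + d b p - d a b) / 2) in *.
  set (Ga := (d a b + d p a - d b p) / 2) in *.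
  set (Gb := (d b p + d a b - d p a) / 2) in *.
  assert (Eh : forall t, hr (d b p - t) = h t).
  { intros t. unfold hr. f_equal. rewrite (d_sym Hm b p). ring. }
  set (c0 := fun W => forall t, 0 <= t <= Gp1 -> d (g0 t) (h t) <= nu \/
              (nbhd d nu W (g0 t) /\ nbhd d nu W (h t))).
  set (c1 := fun W => forall t, 0 <= t <= Ga -> d (g1 t) (g0 (d p a - t)) <= nu \/
              (nbhd d nu W (g1 t) /\ nbhd d nu W (g0 (d p a - t)))).
  set (c2 := fun W => forall t, 0 <= t <= Gb -> d (hr t) (g1 (d a b - t)) <= nu \/
              (nbhd d nu W (hr t) /\ nbhd d nu W (g1 (d a b - t)))).
  assert (D1' : (c0 Z /\ c1 Z /\ c2 Z) \/
                exists U, C U /\ ~ (forall z, U z <-> Z z) /\ c0 U /\ c1 U /\ c2 U).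
  { destruct D1 as [X|[U [HU X]]].
    - left. split; [|split]; intros t Ht; left.
      + pose proof (X I0 t Ht) as Y. change (d (g0 t) (hr (d b p - t)) <= nu) in Y.
        rewrite Eh in Y. exact Y.
      + exact (X I1 t Ht).
      + exact (X I2 t Ht).
    - assert (c0 U /\ c1 U /\ c2 U) as [Y0 [Y1 Y2]].
      { split; [|split]; intros t Ht.
        + pose proof (X I0 t Ht) as Y.
          change (d (g0 t) (hr (d b p - t)) <= nu \/
            (nbhd d nu U (g0 t) /\ nbhd d nu U (hr (d b p - t)))) in Y.
          rewrite Eh in Y. exact Y.
        + exact (X I1 t Ht).
        + exact (X I2 t Ht). }
      destruct (classic (forall z, U z <-> Z z)) as [Heq|Hneq].
      + left. split; [|split]; intros t Ht.
        * destruct (Y0 t Ht) as [|[K1 K2]]; auto. right; split; apply (nbhd_equiv d nu U Z); auto.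
        * destruct (Y1 t Ht) as [|[K1 K2]]; auto. right; split; apply (nbhd_equiv d nu U Z); auto.
        * destruct (Y2 t Ht) as [|[K1 K2]]; auto. right; split; apply (nbhd_equiv d nu U Z); auto.
      + right. exists U. auto. }
  clear D1.
  assert (far0 : forall s z, 0 <= s <= d p a -> Z z -> s <= d (g0 s) z).
  { intros s z Hs Hz. apply (proj_far d Hm Z pi a _ z s Hpi Hz).
    rewrite (d_sym Hm a), (geo_to Hm H0) by lra. fold p. rewrite (d_sym Hm a p). lra. }
  assert (EGq : Gp2 + Gq = d q p) by (unfold Gp2, Gq; lra).
  assert (EGa : Ga + Gp1 = d p a) by (unfold Ga, Gp1; rewrite (d_sym Hm b p); lra).
  assert (EGb : Gb + Gp1 = d b p) by (unfold Gb, Gp1; lra).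
  assert (Dsym : d q p = d p q) by apply (d_sym Hm).
  assert (Ebp : d b p = d p b) by apply (d_sym Hm).
  assert (lowerb : forall s, 0 <= s <= d p a -> nbhd d nu Z (h s) -> s - nu <= d (g0 s) (h s)).
  { intros s Hs [z [Hz Hdz]]. pose proof (far0 s z Hs Hz).
    pose proof (d_tri Hm (g0 s) (h s) z). lra. }
  assert (fromm : Rmin Gp1 Gp2 <= 2 * nu + 2 * f0 -> Gp1 <= 2 * nu + 2 * f0).
  { unfold Rmin. destruct Rle_dec; auto. intros. lra. }
  assert (hdist : forall s s', 0 <= s <= d p b -> 0 <= s' <= d p b -> d (h s) (h s') = Rabs (s - s')).
  { intros. apply (geo_dist Hh); auto. }
  assert (Hpa : forall s, 0 <= s <= d p a -> d p (g0 s) = s) by (intros; apply (geo_from Hm H0); auto).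
  assert (Hpb : forall s, 0 <= s <= d p b -> d p (h s) = s) by (intros; apply (geo_from Hm Hh); auto).
  pose proof (Rmin_l Gp1 Gp2). pose proof (Rmin_r Gp1 Gp2).
  apply (near_closed Hm p (3 * nu + 4 * f0) H1).
  destruct D1' as [[X0 [X1 _]] | [U [HU [Hneq [X0 [_ X2]]]]]].
  -
    assert (Gp1b : Gp1 <= 2 * nu + 2 * f0).
    { apply fromm. apply (interval_cover (fun _ => False) Bad f0 (2 * nu)); auto; [tauto|].
      intros s Hs. destruct (Hgb s ltac:(lra)) as [G|G]; auto. exfalso.
      destruct (X0 s ltac:(lra)) as [Y|[[z [Hz Hdz]] _]].
      - pose proof (lowerb s ltac:(lra) G). lra.
      - pose proof (far0 s z ltac:(lra) Hz). lra. }
    intros eps Heps.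
    set (s := Rmax Gp1 (nu + eps / 2)).
    assert (Hs1 : Gp1 <= s) by apply Rmax_l. assert (Hs2 : nu + eps / 2 <= s) by apply Rmax_r.
    assert (Hs3 : s <= 2 * nu + 2 * f0 + eps).
    { unfold s, Rmax. destruct Rle_dec; lra. }
    destruct (Rle_dec s (d p a)) as [Hsa|Hsa].
    + exists (d p a - s). split; [lra|].
      destruct (X1 (d p a - s) ltac:(lra)) as [Y|[_ [z [Hz Hdz]]]].
      * replace (d p a - (d p a - s)) with s in Y by ring.
        pose proof (d_tri Hm p (g0 s) (g1 (d p a - s))) as TT. rewrite Hpa in TT by lra.
        rewrite (d_sym Hm (g0 s)) in TT. lra.
      * replace (d p a - (d p a - s)) with s in Hdz by ring.
        pose proof (far0 s z ltac:(lra) Hz). lra.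
    + exists 0. split. pose proof (d_nonneg Hm a b); lra.
      destruct H1 as [-> _]. lra.
  -
    set (F := fun s => 0 <= s <= d p b /\ nbhd d nu U (h s) /\ nbhd d nu Z (h s)).
    assert (HF : forall s s', F s -> F s' -> Rabs (s - s') <= f0).
    { intros s s' [A1 [A2 A3]] [A1' [A2' A3']]. rewrite <- hdist by auto.
      apply (phi0_bound U Z); auto. }
    assert (Gp1b : Gp1 <= 2 * nu + 2 * f0).
    { apply fromm. apply (interval_cover F Bad f0 (2 * nu)); auto.
      intros s Hs. destruct (Hgb s ltac:(lra)) as [G|G]; auto. left.
      destruct (X0 s ltac:(lra)) as [Y|[[z [Hz Hdz]] Y]].
      - pose proof (lowerb s ltac:(lra) G). lra.
      - split; [lra|]. split; auto. }
    intros eps Heps.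
    set (e := Rmin eps (d p q - 3 * nu - 5 * f0)).
    assert (He : 0 < e) by (apply Rmin_glb_lt; lra).
    assert (He1 : e <= eps) by apply Rmin_l.
    assert (He2 : e <= d p q - 3 * nu - 5 * f0) by apply Rmin_r.
    destruct (interval_find (fun s => exists t, 0 <= t <= d a b /\ d p (g1 t) <= s + nu) F Bad
       f0 Gp1 Gp2 e Hf0 He HF HBad) as [s [Hs [t [Ht Hdt]]]].
    + intros s Hs. destruct (X2 (d b p - s) ltac:(lra)) as [Y|[Y _]].
      * left. exists (d a b - (d b p - s)). split; [lra|].
        rewrite Eh in Y. pose proof (d_tri Hm p (h s) (g1 (d a b - (d b p - s)))) as TT.
        rewrite Hpb in TT by lra. lra.
      * rewrite Eh in Y. destruct (Hgb s ltac:(lra)) as [G|G]; auto.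
        right; left. split; [lra|]. auto.
    + lra.
    + exists t. split; auto. lra.
Qed.


End Sec_CoreCore.

Section Sec_SS.
Context {M : Type} {d : M -> M -> R} (Hm : is_metric d) (Hc : CAT0 d).

Lemma slim_from p a b q g0 g1 g2 g3 t1 t2 c Dl :
  geodesic d g0 p a -> geodesic d g1 a b -> geodesic d g2 b q -> geodesic d g3 q p ->
  0 <= t1 <= d a b -> 0 <= t2 <= d a b -> d p (g1 t1) <= c -> d q (g1 t2) <= c -> c <= Dl ->
  quad_slim d Dl p a b q g0 g1 g2 g3.
Proof.
  intros H0 H1 H2 H3 Ht1 Ht2 Hp Hq HcD.
  assert (c0 : 0 <= c) by (pose proof (d_nonneg Hm p (g1 t1)); lra).
  assert (Ea : g1 0 = a) by apply H1.
  assert (Eb : g1 (d a b) = b) by apply H1.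
  assert (Za : d a (g1 0) = 0) by (rewrite Ea; apply (d_refl Hm)).
  assert (Zb : d b (g1 (d a b)) = 0) by (rewrite Eb; apply (d_refl Hm)).
  assert (on1 : forall t, 0 <= t <= d a b -> on_seg d g1 a b (g1 t)) by (intros t Ht; exists t; auto).
  pose proof (d_sym Hm a p). pose proof (d_sym Hm q b). pose proof (d_sym Hm p q).
  unfold quad_slim. split; [|split; [|split]]; intros x [s [Hs ->]].
  -
    destruct (sub_bwd (t1 := 0) (t2 := t1) H1) as [Gs Ds]; try lra.
    destruct (convex_geo Hm Hc c s H0 Gs) as [s' [Hs' Hd]]; auto; try lra; try (rewrite (d_sym Hm); lra).
    cbv beta in Hd.
    exists (g1 (t1 - s')). split; [left; apply on1; lra | lra].
  -
    destruct (Rle_dec s t1) as [Hst1|Hst1].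
    + destruct (sub_fwd (t1 := 0) (t2 := t1) H1) as [Gs Ds]; try lra.
      pose proof (rev_geo Hm H0) as R0.
      destruct (convex_geo Hm Hc c s Gs R0) as [s' [Hs' Hd]]; auto; try lra; try (rewrite (d_sym Hm); lra).
    cbv beta in Hd.
      replace (0 + s) with s in Hd by ring.
        exists (g0 (d p a - s')). split; [left; exists (d p a - s'); split; auto; lra | lra].
    + destruct (Rle_dec t2 s) as [Hst2|Hst2].
      * destruct (sub_fwd (t1 := t2) (t2 := d a b) H1) as [Gs Ds]; try lra.
        pose proof (rev_geo Hm H2) as R2.
        destruct (convex_geo Hm Hc c (s - t2) Gs R2) as [s' [Hs' Hd]]; auto; try lra; try (rewrite (d_sym Hm); lra).
    cbv beta in Hd.
        replace (t2 + (s - t2)) with s in Hd by ring.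
           exists (g2 (d b q - s')). split; [right; left; exists (d b q - s'); split; auto; lra | lra].
      * destruct (sub_fwd (t1 := t1) (t2 := t2) H1) as [Gs Ds]; try lra.
        pose proof (rev_geo Hm H3) as R3.
        destruct (convex_geo Hm Hc c (s - t1) Gs R3) as [s' [Hs' Hd]]; auto; try lra; try (rewrite (d_sym Hm); lra).
    cbv beta in Hd.
        replace (t1 + (s - t1)) with s in Hd by ring.
           exists (g3 (d q p - s')). split; [right; right; exists (d q p - s'); split; auto; lra | lra].
  -
    destruct (sub_bwd (t1 := t2) (t2 := d a b) H1) as [Gs Ds]; try lra.
    destruct (convex_geo Hm Hc c s H2 Gs) as [s' [Hs' Hd]]; auto; try lra; try (rewrite (d_sym Hm); lra).
    cbv beta in Hd.
    exists (g1 (d a b - s')). split; [right; left; apply on1; lra | lra].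
  -
    destruct (Rle_dec t2 t1) as [H21|H21].
    + destruct (sub_fwd (t1 := t2) (t2 := t1) H1) as [Gs Ds]; try lra.
      destruct (convex_geo Hm Hc c s H3 Gs) as [s' [Hs' Hd]]; auto; try lra; try (rewrite (d_sym Hm); lra).
    cbv beta in Hd.
      exists (g1 (t2 + s')). split; [right; left; apply on1; lra | lra].
    + destruct (sub_bwd (t1 := t1) (t2 := t2) H1) as [Gs Ds]; try lra.
      destruct (convex_geo Hm Hc c s H3 Gs) as [s' [Hs' Hd]]; auto; try lra; try (rewrite (d_sym Hm); lra).
    cbv beta in Hd.
      exists (g1 (t2 - s')). split; [right; left; apply on1; lra | lra].
Qed.
End Sec_SS.

Theorem lemma2p11 (M : Type) (d : M -> M -> R) (C : (M -> Prop) -> Prop)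
  (nu : R) (phi : R -> R) (Z : M -> Prop) (piZ : M -> M) (a b : M)
  (g0 g1 g2 g3 : R -> M) :
  is_metric d -> complete_metric d -> CAT0 d ->
  (forall U, C U -> closed_sub d U /\ convex_sub d U) ->
  0 <= nu -> (forall r, 0 <= r -> 0 <= phi r) ->
  rel_hyp_pair d C nu phi ->
  C Z -> is_proj d Z piZ ->
  geodesic d g0 (piZ a) a -> geodesic d g1 a b ->
  geodesic d g2 b (piZ b) -> geodesic d g3 (piZ b) (piZ a) ->
  d (piZ a) (piZ b) <= phi (nu_prime nu phi) + 2 * nu + 3 * nu_prime nu phi
  \/ quad_slim d (Delta nu phi) (piZ a) a b (piZ b) g0 g1 g2 g3.
Proof.
  intros Hm _ Hc HCU Hnu Hphi Hrh HZ Hpi H0 H1 H2 H3.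
  assert (Hconv : forall U, C U -> convex_sub d U) by (intros U HU; apply HCU; auto).
  destruct (Rle_dec (d (piZ a) (piZ b)) (phi (nu_prime nu phi) + 2 * nu + 3 * nu_prime nu phi)) as [Hle|Hgt].
  - left; auto.
  - right.
    pose proof (phi0_nonneg nu phi Hnu Hphi) as Hf0.
    pose proof (phi0_le nu phi) as Hfl.
    assert (Hf0' : phi0 nu phi <= phi (nu_prime nu phi)) by apply Rmin_r.
    pose proof (Hphi nu Hnu) as Hpn.
    assert (Hnp : 0 <= nu_prime nu phi) by (unfold nu_prime; lra).
    pose proof (Hphi _ Hnp) as Hpnp.
    assert (HD : 3 * nu + 5 * phi0 nu phi < d (piZ a) (piZ b)).
    { unfold nu_prime in *. lra. }
    destruct (core Hm Hc C nu phi Hconv Hnu Hphi Hrh Z HZ piZ Hpi a b g0 g1 g2 g3 H0 H1 H2 H3 HD)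
      as [t1 [Ht1 Hd1]].
    pose proof (rev_geo Hm H0) as R0. pose proof (rev_geo Hm H1) as R1.
    pose proof (rev_geo Hm H2) as R2. pose proof (rev_geo Hm H3) as R3.
    assert (HD' : 3 * nu + 5 * phi0 nu phi < d (piZ b) (piZ a)) by (rewrite (d_sym Hm); lra).
    destruct (core Hm Hc C nu phi Hconv Hnu Hphi Hrh Z HZ piZ Hpi b a _ _ _ _ R2 R1 R0 R3 HD')
      as [t2 [Ht2 Hd2]].
    cbv beta in Hd2. rewrite (d_sym Hm b a) in Ht2.
    apply (slim_from Hm Hc _ _ _ _ g0 g1 g2 g3 t1 (d a b - t2) (3 * nu + 4 * phi0 nu phi)); auto; try lra.
    unfold Delta, nu_dprime. assert (nu_prime nu phi = 4 * nu + 2 * phi nu) by reflexivity. lra.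
Qed.
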